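(* Let $(G,k)$ be an instance, $S\subseteq V$, and let $V_{\mathrm{tree}}$ be the union of the vertex sets of those connected components of $G-S$ that are trees. If $v\in S$ is large-dense and $|N(v)\cap V_{\mathrm{tree}}|\ge 2k+4$, then every feasible solution contains $v$; consequently $(G,k)$ is a yes-instance iff $(G-v,k-1)$ is.
   Context: Graphs are undirected, without self-loops, possibly with multi-edges. $N(v)$ is the set of vertices adjacent to $v$; $\rho(v)$ is the number of unordered pairs $\{u_1,u_2\}\subseteq N(v)$ joined by at least one edge. A vertex $v$ is large-dense if $|N(v)|>7k$ and $\rho(v)> |N(v)|(|N(v)|-1)/4$. A vertex set induces a clique if between any two distinct vertices there is exactly one edge, and a tree if it is connected and acyclic (two parallel edges form a cycle). A feasible solution is $X\subseteq V$, $|X|\le k$, with every component of $G-X$ a clique or a tree. *)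

(* Defs.v *)
From mathcomp Require Import all_boot all_order all_algebra.
Set Implicit Arguments. Unset Strict Implicit. Unset Printing Implicit Defensive.
Import Order.TTheory GRing.Theory Num.Theory.

(* A multigraph on vertices drawn from a finite type T:
   vertex set gV, and gm u w = number of edges between u and w. *)
Record mgraph (T : finType) := MGraph { gV : {set T}; gm : T -> T -> nat }.

Section Defs.
Variable T : finType.
Implicit Types (G : mgraph T) (W C S X : {set T}).

Definition wf_mgraph G :=
  [/\ forall u w, gm G u w = gm G w u,
      forall u, gm G u u = 0%N &
      forall u w, (0 < gm G u w)%N -> u \in gV G /\ w \in gV G].

Definition del_vertex G (v : T) : mgraph T := MGraph (gV G :\ v) (gm G).

Definition rel_in G W : rel T := fun x y => [&& x \in W, y \in W & (0 < gm G x y)%N].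

Definition nbhd G v : {set T} := [set u | rel_in G (gV G) v u].

Definition rho G v : nat :=
  #|[set p : {set T} | (p \subset nbhd G v) &&
     [exists u1, exists u2, [&& p == [set u1; u2], u1 != u2 & (0 < gm G u1 u2)%N]]]|.

Definition large_dense G (k : nat) v :=
  (7 * k < #|nbhd G v|)%N && (#|nbhd G v| * (#|nbhd G v| - 1) < 4 * rho G v)%N.

Definition comp G W x : {set T} := [set y | connect (rel_in G W) x y].

Definition induces_clique G C :=
  forall u w, u \in C -> w \in C -> u != w -> gm G u w = 1%N.

(* a cycle in the induced multigraph G[C]: two parallel edges, or a closed
   walk through >= 3 distinct vertices *)
Definition has_cycle G C :=
  (exists u w, [/\ u \in C, w \in C, u != w & (2 <= gm G u w)%N]) \/
  (exists s : seq T, [/\ (3 <= size s)%N, uniq s, {subset s <= C} &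
                        cycle (rel_in G C) s]).

Definition induces_tree G C :=
  (forall x y, x \in C -> y \in C -> connect (rel_in G C) x y) /\ ~ has_cycle G C.

Definition is_Vtree G S (Vt : {set T}) :=
  forall x, x \in Vt <-> (x \in gV G :\: S /\ induces_tree G (comp G (gV G :\: S) x)).

Definition feasible_b G (b : int) X :=
  [/\ X \subset gV G, (#|X|%:Z <= b)%R &
      forall x, x \in gV G :\: X ->
        induces_clique G (comp G (gV G :\: X) x) \/
        induces_tree G (comp G (gV G :\: X) x)].

Definition feasible G (k : nat) X := feasible_b G k%:Z X.

Definition yes_instance G (b : int) := exists X, feasible_b G b X.

End Defs.

(* Main.v *)
Require Import Defs.
From mathcomp Require Import all_boot all_order all_algebra.
From mathcomp Require Import zify.
Import Order.TTheory GRing.Theory Num.Theory.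

Section Aux.
Variable T : finType.
Implicit Types (G : mgraph T) (W X : {set T}).

Lemma comp_edge G W x y : x \in W -> y \in W -> (0 < gm G x y)%N ->
  y \in Defs.comp G W x.
Proof. by move=> xW yW e; rewrite inE; apply: connect1; rewrite /rel_in xW yW. Qed.

Lemma comp_self G W x : x \in Defs.comp G W x.
Proof. by rewrite inE connect0. Qed.

Lemma comp_trans G W x y z : y \in Defs.comp G W x -> z \in Defs.comp G W y ->
  z \in Defs.comp G W x.
Proof. rewrite !inE; exact: connect_trans. Qed.

Lemma nbhdP G v u : u \in nbhd G v ->
  [/\ v \in gV G, u \in gV G & (0 < gm G v u)%N].
Proof. by rewrite inE /rel_in => /and3P[]. Qed.

Lemma three_of (A : {set T}) : (3 <= #|A|)%N ->
  exists u1 u2 u3, [/\ u1 \in A, u2 \in A, u3 \in A &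
     uniq [:: u1; u2; u3]].
Proof.
rewrite cardE => H.
have U := enum_uniq (pred_of_set A).
have M := mem_enum (pred_of_set A).
move: H U M.
case: (enum _) => [|u1 [|u2 [|u3 s]]] //= _ U M.
exists u1, u2, u3; split; try by rewrite -M !inE eqxx ?orbT.
move: U => /and4P[]; rewrite !inE !negb_or => /and3P[-> -> _] /andP[-> _] _ _.
by [].


Qed.

End Aux.

Theorem mainTheorem16 (T : finType) (G : mgraph T) (k : nat)
    (S Vt : {set T}) (v : T) :
  wf_mgraph G -> S \subset gV G -> is_Vtree G S Vt ->
  v \in S -> large_dense G k v ->
  (2 * k + 4 <= #|nbhd G v :&: Vt|)%N ->
  (forall X, feasible G k X -> v \in X) /\
  (yes_instance G k%:Z <-> yes_instance (del_vertex G v) (k%:Z - 1)%R).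
Proof.
move=> [gsym gloop gV_of] SV Vtree vS ld big.
have vV : v \in gV G by apply: (subsetP SV).
have part1 : forall X, feasible G k X -> v \in X.
  move=> X [XV Xk Hcomp].
  have Xk' : (#|X| <= k)%N by rewrite -lez_nat.
  apply/negPn/negP => vX.
  have vW : v \in gV G :\: X by rewrite inE vX vV.
  case: (Hcomp v vW) => [Hcl | [_ Hcyc]].
  -
    set A := (nbhd G v :&: Vt) :\: X.
    have cA : (3 <= #|A|)%N.
      rewrite /A cardsD.
      have : (#|(nbhd G v :&: Vt) :&: X| <= #|X|)%N by apply/subset_leq_card/subsetIr.
      lia.
    have memA : forall u, u \in A ->
       [/\ u \in Defs.comp G (gV G :\: X) v, u \in gV G :\: S,
           induces_tree G (Defs.comp G (gV G :\: S) u) & (0 < gm G v u)%N].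
      move=> u /setDP[/setIP[uN uT] uX].
      move: uN; rewrite inE => /and3P[_ uV e].
      have [uVS Htr] := (Vtree u).1 uT.
      split => //; apply: comp_edge => //; by rewrite inE ?uX ?vX ?uV.
    have [u1 [u2 [u3 [A1 A2 A3 U]]]] := @three_of _ A cA.
    have [c1 s1 [_ Hc1] _] := memA _ A1.
    have [c2 s2 _ _] := memA _ A2.
    have [c3 s3 _ _] := memA _ A3.
    move: U => /= /andP[]; rewrite !inE !negb_or => /andP[n12 n13] /andP[n23 _].
    have e12 : gm G u1 u2 = 1%N by apply: Hcl.
    have e13 : gm G u1 u3 = 1%N by apply: Hcl.
    have e23 : gm G u2 u3 = 1%N by apply: Hcl.
    have d2 : u2 \in Defs.comp G (gV G :\: S) u1 by apply: comp_edge; rewrite ?e12.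
    have d3 : u3 \in Defs.comp G (gV G :\: S) u1 by apply: comp_edge; rewrite ?e13.
    apply: Hc1; right; exists [:: u1; u2; u3]; split => //.
    + by rewrite /= !inE negb_or n12 n13 n23.
    + by move=> x; rewrite !in_cons in_nil orbF => /or3P[] /eqP->; rewrite ?comp_self.
    + by rewrite /= /rel_in comp_self d2 d3 e12 e23 gsym e13.
  -
    set N := nbhd G v.
    set P := [set p : {set T} | (p \subset N) &&
     [exists u1, exists u2, [&& p == [set u1; u2], u1 != u2 & (0 < gm G u1 u2)%N]]].
    have rhoP : rho G v = #|P| by [].
    have sub : P \subset (fun pr : T * T => [set pr.1; pr.2]) @: setX (N :&: X) N.
      apply/subsetP => p; rewrite inE => /andP[pN /existsP[u1 /existsP[u2 /and3P[/eqP pE n12 e12]]]].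
      have u1N : u1 \in N by apply: (subsetP pN); rewrite pE !inE eqxx.
      have u2N : u2 \in N by apply: (subsetP pN); rewrite pE !inE eqxx orbT.
      case: (boolP (u1 \in X)) => u1X.
        by apply/imsetP; exists (u1, u2); rewrite ?pE // in_setX in_setI u1N u1X u2N.
      case: (boolP (u2 \in X)) => u2X.
        apply/imsetP; exists (u2, u1); last by rewrite pE /= setUC.
        by rewrite in_setX in_setI u1N u2X u2N.
      exfalso; apply: Hcyc; right.
      have [_ u1V ev1] := @nbhdP _ _ _ _ u1N.
      have [_ u2V ev2] := @nbhdP _ _ _ _ u2N.
      have nv1 : v != u1 by apply/eqP=> E; move: ev1; rewrite -E gloop.
      have nv2 : v != u2 by apply/eqP=> E; move: ev2; rewrite -E gloop.
      have c1 : u1 \in Defs.comp G (gV G :\: X) v by apply: comp_edge; rewrite // inE u1X.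
      have c2 : u2 \in Defs.comp G (gV G :\: X) v by apply: comp_edge; rewrite // inE u2X.
      exists [:: v; u1; u2]; split => //.
      + by rewrite /= !inE negb_or nv1 nv2 n12.
      + by move=> x; rewrite !in_cons in_nil orbF => /or3P[] /eqP->; rewrite ?comp_self.
      + by rewrite /= /rel_in comp_self c1 c2 e12 ev1 gsym ev2.
    have : (rho G v <= #|N :&: X| * #|N|)%N.
      rewrite rhoP -cardsX; apply: leq_trans (subset_leq_card sub) _.
      exact: leq_imset_card.
    have : (#|N :&: X| <= #|X|)%N by apply/subset_leq_card/subsetIr.
    move: ld; rewrite /large_dense -/N => /andP[l1 l2].
    nia.
split => //.
split.
- move=> [X HX]; have vX := part1 X HX.
  case: HX => [XV Xk Hcomp].
  have E : (gV G :\ v) :\: (X :\ v) = gV G :\: X.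
    apply/setP => y; rewrite !inE; case: (eqVneq y v) => [->|] //=.
    by rewrite vX.
  exists (X :\ v); split.
  + by rewrite /del_vertex /=; apply: setSD.
  + move: Xk; rewrite (cardsD1 v X) vX /=; lia.
  + by rewrite /del_vertex /= E => x Hx; apply: Hcomp.
- move=> [Y [YV Yk Hcomp]].
  have {}YV : Y \subset gV G :\ v := YV.
  have vY : v \notin Y by apply/negP => /(subsetP YV); rewrite !inE eqxx.
  have E : (gV G :\ v) :\: Y = gV G :\: (v |: Y).
    by apply/setP => y; rewrite !inE; case: (y \in Y); case: (y == v); case: (y \in gV G).
  exists (v |: Y); split.
  + apply/subsetP => y; rewrite !inE => /orP[/eqP->//|yY].
    by move: (subsetP YV y yY); rewrite !inE => /andP[].
  + move: Yk; rewrite cardsU1 vY /=; lia.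
  + by rewrite -E => x Hx; apply: Hcomp.
Qed.
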